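(* Let $k\ge 2$ be a fixed integer. Then, as $n\to\infty$, $$\mu_{tsp,k}(C_n)\sim\left(1-\frac{1}{2^{k-1}}\right)n,$$ i.e. $\mu_{tsp,k}(C_n)/n\to 1-2^{-(k-1)}$.
   Context: $C_n$ is the cycle on $n$ vertices. For a set $S$ of $k$ vertices of a graph $G$ of order $n$, $\mathrm{tsp}_k(S)$ is the length (number of edge traversals, with multiplicity) of a shortest closed walk in $G$ visiting all vertices of $S$, and $\mu_{tsp,k}(G)=\binom{n}{k}^{-1}\sum_{S\subseteq V,\,|S|=k}\mathrm{tsp}_k(S)$. *)

(* Defs.v *)
From HB Require Import structures.
From mathcomp Require Import all_boot all_order all_algebra.
From mathcomp Require Import all_classical all_reals all_analysis.
Set Implicit Arguments. Unset Strict Implicit. Unset Printing Implicit Defensive.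
Import Order.TTheory GRing.Theory Num.Theory.

(* The cycle C_n on vertex set 'I_n = {0,...,n-1}: i ~ j iff i <> j and
   j = i+1 (mod n) or i = j+1 (mod n).  (For n >= 3 this is exactly C_n.) *)
Definition cyc_adj (n : nat) : rel 'I_n :=
  fun i j => (i != j) && ((val j == i.+1 %% n) || (val i == j.+1 %% n)).

Definition has_cwalk (n : nat) (S : {set 'I_n}) (L : nat) : bool :=
  [exists x : 'I_n, exists p : L.-tuple 'I_n,
     [&& path (@cyc_adj n) x p, last x p == x &
         [forall v in S, v \in x :: tval p]]].

(* For n >= 1 the walk
   0,1,...,n-1,n-2,...,0 of length 2(n-1) visits every vertex, so the least
   such L is < 2n+1 and this bounded search returns the true minimum. *)
Definition tsp (n : nat) (S : {set 'I_n}) : nat :=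
  find (has_cwalk S) (iota 0 (2 * n).+1).

Definition mu_tsp (R : realType) (k n : nat) : R :=
  ((\sum_(S : {set 'I_n} | #|S| == k) tsp S)%:R / ('C(n, k))%:R)%R.

(* Main.v *)
Require Import Defs.
From HB Require Import structures.
From mathcomp Require Import all_boot all_order all_algebra.
From mathcomp Require Import all_classical all_reals all_analysis.
From mathcomp Require Import zify ring lra.
Import Order.TTheory GRing.Theory Num.Theory numFieldNormedType.Exports.

Definition cdist (n v y : nat) := (y + n.+1 - v) %% n.+1.
Definition carc (n w t : nat) : {set 'I_n.+1} := [set y : 'I_n.+1 | cdist n w y <= t].
Definition ccnt (n h : nat) (S : {set 'I_n.+1}) :=
  #|[set v : 'I_n.+1 | S \subset carc n v h]|.

Lemma modS2 a N : a < 2 * N -> a %% N = if a < N then a else a - N.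
Proof.
move=> h; case: ltnP => h2; first by rewrite modn_small.
have -> : a = (a - N) + N by lia.
by rewrite modnDr modn_small; lia.
Qed.

Lemma cdist_lt n v y : cdist n v y < n.+1.
Proof. by rewrite /cdist ltn_pmod. Qed.

Lemma cdist_add n v j : v < n.+1 -> j < n.+1 -> cdist n v ((v + j) %% n.+1) = j.
Proof.
move=> hv hj; rewrite /cdist -addnBA; last by lia.
rewrite modnDml.
have -> : v + j + (n.+1 - v) = j + n.+1 by lia.
by rewrite modnDr modn_small.
Qed.

Lemma cdist_inv n v y : v < n.+1 -> y < n.+1 -> (v + cdist n v y) %% n.+1 = y.
Proof.
move=> hv hy; rewrite /cdist modnDmr.
have -> : v + (y + n.+1 - v) = y + n.+1 by lia.
by rewrite modnDr modn_small.
Qed.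

Lemma cdist_back n v y : v < n.+1 -> y < n.+1 -> (y + n.+1 - cdist n v y) %% n.+1 = v.
Proof.
move=> hv hy; rewrite /cdist (@modS2 (y + n.+1 - v)); last by lia.
case: ltnP => h.
  have -> : y + n.+1 - (y + n.+1 - v) = v by lia.
  by rewrite modn_small.
have -> : y + n.+1 - (y + n.+1 - v - n.+1) = v + n.+1 by lia.
by rewrite modnDr modn_small.
Qed.

Lemma valP_mod n a : nat_of_ord (inord (a %% n.+1) : 'I_n.+1) = a %% n.+1.
Proof. by rewrite /= inordK // ltn_pmod. Qed.

Lemma adj_step n (a b : 'I_n.+1) : 0 < n -> (b : nat) = a.+1 %% n.+1 ->
  cyc_adj a b && cyc_adj b a.
Proof.
move=> hn hb; rewrite /cyc_adj /= hb eqxx /= orbT andbT.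
have ne : a != b.
  apply/eqP => e; move: hb; rewrite -e.
  have ha := ltn_ord a.
  rewrite (@modS2 a.+1); last by lia.
  case: ltnP => h; clear e; lia.
by rewrite ne eq_sym ne.
Qed.


Lemma modS_step a N : a.+1 %% N = (a %% N).+1 %% N.
Proof. by rewrite -[a.+1]addn1 -[(a %% N).+1]addn1 modnDml. Qed.

Lemma walk_gen n (S : {set 'I_n.+1}) (w : nat) (g : nat -> nat) L :
  0 < n ->
  (forall i, i < L -> g i.+1 = (g i).+1 \/ g i = (g i.+1).+1) ->
  (w + g L) %% n.+1 = (w + g 0) %% n.+1 ->
  (forall y : 'I_n.+1, y \in S -> exists2 j, j <= L & (y : nat) = (w + g j) %% n.+1) ->
  has_cwalk S L.
Proof.
move=> hn hg hL hS.
pose f j : 'I_n.+1 := inord ((w + g j) %% n.+1).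
have fv j : (f j : nat) = (w + g j) %% n.+1 by rewrite /f inordK // ltn_pmod.
pose p := mkseq (fun i => f i.+1) L.
have sp : size p == L by rewrite size_mkseq.
have nthf i : i <= L -> nth (f 0) (f 0 :: p) i = f i.
  case: i => [//|i] hi /=; by rewrite nth_mkseq.
apply/existsP; exists (f 0); apply/existsP; exists (Tuple sp).
apply/and3P; split => /=.
- apply/(pathP (f 0)) => i; rewrite size_mkseq => hi.
  rewrite nthf; last by apply: ltnW.
  rewrite nth_mkseq //.
  have [e|e] := hg i hi.
    by case/andP: (@adj_step n (f i) (f i.+1) hn ltac:(rewrite !fv e addnS -modS_step; done)).
  by case/andP: (@adj_step n (f i.+1) (f i) hn ltac:(rewrite !fv e addnS -modS_step; done)).
- rewrite (last_nth (f 0)) (eqP sp) nthf //.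
  by apply/eqP/val_inj; rewrite /= !fv.
- apply/forallP => y; apply/implyP => yS.
  have [j hj ej] := hS y yS.
  have -> : y = f j by apply/val_inj; rewrite /= fv.
  rewrite -nthf //; apply: mem_nth => /=; rewrite size_mkseq; lia.
Qed.



Lemma tsp_le n (S : {set 'I_n.+1}) L : has_cwalk S L -> L <= 2 * n.+1 -> tsp S <= L.
Proof.
move=> hw hL; rewrite /tsp; case: leqP => // h.
have := before_find 0 h; rewrite nth_iota; last by lia.
by rewrite add0n hw.
Qed.

Lemma tsp_walk n (S : {set 'I_n.+1}) : tsp S < n.+1 -> has_cwalk S (tsp S).
Proof.
move=> h; have hs : has (has_cwalk S) (iota 0 (2 * n.+1).+1).
  by rewrite has_find size_iota; move: h; rewrite /tsp; lia.
have := nth_find 0 hs; rewrite nth_iota; first by rewrite add0n.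
by move: hs; rewrite has_find size_iota.
Qed.


Lemma seq_lip (s : nat -> nat) L :
  (forall i, i < L -> s i.+1 = (s i).+1 \/ s i = (s i.+1).+1) ->
  forall i d, i + d <= L -> s (i + d) <= s i + d /\ s i <= s (i + d) + d.
Proof.
move=> hs i; elim=> [|d IH] h; first by rewrite addn0; lia.
have [h1 h2] := IH ltac:(lia).
have := hs (i + d) ltac:(lia); rewrite addnS; lia.
Qed.

Lemma seq_bound (s : nat -> nat) L :
  (forall i, i < L -> s i.+1 = (s i).+1 \/ s i = (s i.+1).+1) -> s L = s 0 ->
  forall i j, i <= L -> j <= L -> 2 * (s j - s i) <= L.
Proof.
move=> hs hL i j hi hj.
have l1 := @seq_lip s L hs.
case: (leqP i j) => hij.
  have [a1 a2] := l1 i (j - i) ltac:(lia).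
  have [b1 b2] := l1 j (L - j) ltac:(lia).
  have [c1 c2] := l1 0 i ltac:(lia).
  rewrite subnKC // in a1 a2; rewrite subnKC // in b1 b2; rewrite add0n in c1 c2.
  lia.
have [a1 a2] := l1 j (i - j) ltac:(lia).
have [b1 b2] := l1 i (L - i) ltac:(lia).
have [c1 c2] := l1 0 j ltac:(lia).
rewrite subnKC in a1 a2; last by lia.
rewrite subnKC // in b1 b2; rewrite add0n in c1 c2.
lia.
Qed.


Lemma walk_lb n (S : {set 'I_n.+1}) L : 0 < n -> has_cwalk S L -> L < n.+1 ->
  exists w t : nat, (w < n.+1) /\ (S \subset carc n w t) /\ (2 * t <= L).
Proof.
move=> hn /existsP [x /existsP [p /and3P [hpath hlast hS]]] hL.
have [m hm] : exists m : 'I_n.+1, m \notin x :: tval p.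
  case: (pickP (fun m => m \notin x :: tval p)) => [m hm | H]; first by exists m.
  exfalso.
  have hall : forall m, m \in x :: tval p by move=> m; move: (H m) => /negbFE.
  move: (size_tuple p) hlast hall; case: (tval p) => [|y q] sz hl hall.
    have : #|'I_n.+1| <= #|[:: x]|.
      apply: subset_leq_card; apply/fintype.subsetP => z _; exact: hall.
    have := card_size [:: x]; rewrite card_ord /=; lia.
  have xin : x \in y :: q by move: hl => /= /eqP <-; exact: mem_last.
  have : #|'I_n.+1| <= #|y :: q|.
    apply: subset_leq_card; apply/fintype.subsetP => z _; have := hall z.
    by rewrite in_cons => /orP [/eqP -> | ].
  have := card_size (y :: q); rewrite card_ord sz; lia.
pose m' := m.+1 %% n.+1.
have hm' : m' < n.+1 by rewrite ltn_pmod.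
pose c (y : 'I_n.+1) := cdist n m' y.
have c_ne (y : 'I_n.+1) : y != m -> c y < n.
  move=> ym; have := cdist_lt n m' y; rewrite leq_eqVlt => /orP [/eqP e|]; last by [].
  exfalso; move/negP: ym; apply; apply/eqP/val_inj => /=.
  have := @cdist_inv n m' y hm' (ltn_ord y); rewrite -/(c y).
  have -> : c y = n by rewrite /c; lia.
  move=> <-; rewrite modnDml.
  have -> : m.+1 + n = m + n.+1 by lia.
  by rewrite modnDr modn_small.
have c_step (y z : 'I_n.+1) : y != m -> (z : nat) = y.+1 %% n.+1 -> c z = (c y).+1.
  move=> ym hz.
  have e : (y : nat) = (m' + c y) %% n.+1 by rewrite /c (@cdist_inv n m' y hm' (ltn_ord y)).
  rewrite /c hz {1}e -modS_step -addnS cdist_add //.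
  have := c_ne y ym; rewrite /c; lia.
pose s i := c (nth x (x :: tval p) i).
have szp : size (tval p) = L by rewrite size_tuple.
have nth_ne i : i <= L -> nth x (x :: tval p) i != m.
  move=> hi; apply/negP => /eqP e; move/negP: hm; apply; rewrite -e.
  by apply: mem_nth => /=; rewrite szp ltnS.
have hs : forall i, i < L -> s i.+1 = (s i).+1 \/ s i = (s i.+1).+1.
  move=> i hi; move/(pathP x): hpath => /(_ i); rewrite szp => /(_ hi).
  rewrite /cyc_adj /= => /andP [_ /orP [/eqP e | /eqP e]].
    by left; rewrite /s /= (c_step _ _ (nth_ne i (ltnW hi)) e).
  by right; rewrite /s /= (c_step _ _ _ e) //; apply: (nth_ne i.+1 hi).
have nl : nth x (x :: tval p) L = x by rewrite -[RHS](eqP hlast) (last_nth x) szp.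
have hsL : s L = s 0 by rewrite /s nl.
case: (set_0Vmem S) => [-> | [y0 y0S]].
  by exists 0, 0; rewrite finset.sub0set.
have [sa saS minA] := @arg_minnP _ y0 (fun y => y \in S) c y0S.
have [sb sbS maxB] := @arg_maxnP _ y0 (fun y => y \in S) c y0S.
have inp y : y \in S -> y \in x :: tval p.
  by move=> yS; move/forallP: hS => /(_ y); rewrite yS.
have ia := nth_index x (inp sa saS).
have ib := nth_index x (inp sb sbS).
have ial : index sa (x :: tval p) <= L by have := index_mem sa (x :: tval p); rewrite inp //= szp ltnS.
have ibl : index sb (x :: tval p) <= L by have := index_mem sb (x :: tval p); rewrite inp //= szp ltnS.
have hb := @seq_bound s L hs hsL _ _ ial ibl.
rewrite /s ia ib in hb.
exists ((m' + c sa) %% n.+1), (c sb - c sa); split; first by rewrite ltn_pmod.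
split=> //.
apply/fintype.subsetP => y yS; rewrite inE.
have hy1 := minA y yS; have hy2 := maxB y yS; rewrite /= in hy1 hy2.
have e : (y : nat) = (((m' + c sa) %% n.+1) + (c y - c sa)) %% n.+1.
  rewrite modnDml -addnA subnKC //.
  by rewrite /c (@cdist_inv n m' y hm' (ltn_ord y)).
have hj : c y - c sa < n.+1 by have := cdist_lt n m' y; rewrite -/(c y); lia.
have := @cdist_add n _ _ (ltn_pmod (m' + c sa) (ltn0Sn n)) hj; rewrite -e => ->.
lia.
Qed.


Lemma ccnt_lb n h (S : {set 'I_n.+1}) w t : w < n.+1 -> t <= h -> h < n.+1 ->
  S \subset carc n w t -> h.+1 - t <= ccnt n h S.
Proof.
move=> hw ht hh sub.
pose v (j : 'I_(h.+1 - t)) : 'I_n.+1 := inord ((w + n.+1 - j) %% n.+1).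
have vv j : (v j : nat) = (w + n.+1 - j) %% n.+1 by rewrite /v inordK // ltn_pmod.
have key (j : 'I_(h.+1 - t)) e : (v j + (j + e)) %% n.+1 = (w + e) %% n.+1.
  rewrite vv modnDml.
  have hj := ltn_ord j.
  have -> : w + n.+1 - j + (j + e) = (w + e) + n.+1 by lia.
  by rewrite modnDr.
have kw j : (v j + j) %% n.+1 = w.
  by have := key j 0; rewrite !addn0 (modn_small hw).
have dj j : cdist n (v j) w = j.
  rewrite -(kw j) cdist_add //; have := ltn_ord j; lia.
have vinj : injective v.
  by move=> j1 j2 e; apply/val_inj => /=; rewrite -(dj j1) -(dj j2) e.
have sub2 : [set v j | j : 'I_(h.+1 - t)] \subset [set v' : 'I_n.+1 | S \subset carc n v' h].
  apply/fintype.subsetP => _ /imsetP [j _ ->]; rewrite inE.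
  apply/fintype.subsetP => y yS; rewrite inE.
  have := fintype.subsetP sub y yS; rewrite inE => he.
  have ey : (y : nat) = (v j + (j + cdist n w y)) %% n.+1.
    by rewrite key cdist_inv.
  have hj := ltn_ord j.
  rewrite ey cdist_add //; lia.
rewrite /ccnt; apply: leq_trans (subset_leq_card sub2).
by rewrite card_imset // card_ord.
Qed.


Lemma ccnt_ub n h (S : {set 'I_n.+1}) : 2 * h < n.+1 -> S != finset.set0 -> 0 < ccnt n h S ->
  exists w t : nat, (w < n.+1) /\ (S \subset carc n w t) /\ (t + ccnt n h S <= h.+1).
Proof.
move=> hh Sne cpos.
case/finset.set0Pn: Sne => x0 x0S.
pose V := [set v : 'I_n.+1 | S \subset carc n v h].
have [v0 v0V] : exists v0, v0 \in V.
  by apply/finset.set0Pn; rewrite -card_gt0.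
pose e (v : 'I_n.+1) := cdist n v x0.
have eh v : v \in V -> e v <= h.
  by rewrite inE => /fintype.subsetP /(_ x0 x0S); rewrite inE.
have [v1 v1V max1] := @arg_maxnP _ v0 (fun v => v \in V) e v0V.
have [v2 v2V min2] := @arg_minnP _ v0 (fun v => v \in V) e v0V.
have ev (v : 'I_n.+1) : (v : nat) = (x0 + n.+1 - e v) %% n.+1.
  by rewrite /e cdist_back.
have h1 := eh v1 v1V; have h2 := eh v2 v2V.
have h12 := max1 v2 v2V; rewrite /= in h12.
pose e1 := e v1; pose e2 := e v2; pose dl := e1 - e2.
have card_le : ccnt n h S <= dl.+1.
  pose u (i : 'I_dl.+1) : 'I_n.+1 := inord ((x0 + n.+1 - (e2 + i)) %% n.+1).
  have sub : V \subset [set u i | i : 'I_dl.+1].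
    apply/fintype.subsetP => v vV; apply/imsetP.
    have hv1 := max1 v vV; have hv2 := min2 v vV; rewrite /= in hv1 hv2.
    have hi : e v - e2 < dl.+1 by rewrite /dl /e1 /e2; lia.
    exists (Ordinal hi) => //; apply/val_inj => /=.
    rewrite inordK ?ltn_pmod // {1}(ev v).
    by congr (_ %% _); rewrite /= /e2; lia.
  apply: leq_trans (subset_leq_card sub) _.
  by apply: leq_trans (leq_imset_card _ _) _; rewrite card_ord.
have e21 : (v1 + dl) %% n.+1 = v2.
  rewrite {1}(ev v1) (ev v2) modnDml -/e1 -/e2.
  by congr (_ %% _); rewrite /dl; lia.
exists v2, (h - dl); split; first exact: ltn_ord.
split; last by rewrite /dl /e1 /e2; lia.
apply/fintype.subsetP => y yS; rewrite inE.
have hy2 : cdist n v2 y <= h.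
  by move: v2V; rewrite inE => /fintype.subsetP /(_ y yS); rewrite inE.
have hy1 : cdist n v1 y <= h.
  by move: v1V; rewrite inE => /fintype.subsetP /(_ y yS); rewrite inE.
have ey : (y : nat) = (v1 + (dl + cdist n v2 y)) %% n.+1.
  by rewrite addnA -modnDml e21 cdist_inv.
have hd : dl + cdist n v2 y < n.+1 by rewrite /dl /e1 /e2; lia.
have hh1 : cdist n v1 y = dl + cdist n v2 y by rewrite {1}ey cdist_add.
lia.
Qed.


Lemma card_carc n v h : v < n.+1 -> h < n.+1 -> #|carc n v h| = h.+1.
Proof.
move=> hv hh.
pose u (j : 'I_h.+1) : 'I_n.+1 := inord ((v + j) %% n.+1).
have uv j : (u j : nat) = (v + j) %% n.+1 by rewrite /u inordK // ltn_pmod.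
have -> : carc n v h = [set u j | j : 'I_h.+1].
  apply/finset.setP => y; rewrite inE; apply/idP/imsetP.
    move=> hy; exists (Ordinal (hy : cdist n v y < h.+1)) => //.
    by apply/val_inj; rewrite /= uv /= cdist_inv.
  case=> j _ ->; rewrite uv cdist_add //; have := ltn_ord j; lia.
rewrite card_imset ?card_ord // => j1 j2 e.
apply/val_inj => /=.
have hj1 : (j1 : nat) < n.+1 by have := ltn_ord j1; lia.
have hj2 : (j2 : nat) < n.+1 by have := ltn_ord j2; lia.
by rewrite -(@cdist_add n v j1 hv hj1) -(@cdist_add n v j2 hv hj2) -!uv e.
Qed.

Lemma sum_ccnt n h k : h < n.+1 ->
  \sum_(S : {set 'I_n.+1} | #|S| == k) ccnt n h S = n.+1 * 'C(h.+1, k).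
Proof.
move=> hh; rewrite /ccnt.
under eq_bigr => S _ do rewrite -sum1dep_card.
rewrite (exchange_big_dep xpredT) //=.
under eq_bigr => v _.
  rewrite sum1dep_card.
  have -> : [set x : {set 'I_n.+1} | (#|x| == k) && (x \subset carc n v h)] =
            [set x : {set 'I_n.+1} | x \subset carc n v h & #|x| == k].
    by apply/finset.setP => x; rewrite !inE andbC.
  rewrite cards_draws card_carc //.
  over.
by rewrite sum_nat_const card_ord.
Qed.


Lemma tsp_bounds n (S : {set 'I_n.+1}) : 1 < n -> S != finset.set0 ->
  n.+1 <= tsp S + 2 * ccnt n n./2 S <= n.+2.
Proof.
move=> hn Sne.
have hh : 2 * n./2 <= n /\ n <= 2 * n./2 + 1.
  have := odd_double_half n; rewrite -mul2n; case: (odd n) => /=; lia.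
have hn0 : 0 < n by lia.
apply/andP; split.
  case: (leqP n.+1 (tsp S)) => hT; first by lia.
  have [w [t [hw [sub ht]]]] := @walk_lb n S (tsp S) hn0 (@tsp_walk n S hT) hT.
  case: (leqP t n./2) => htn.
    have := @ccnt_lb n n./2 S w t hw htn (ltac:(lia) : n./2 < n.+1) sub; lia.
  lia.
case: (posnP (ccnt n n./2 S)) => hc.
  rewrite hc muln0 addn0.
  have : has_cwalk S n.+1.
    apply: (@walk_gen n S 0 id n.+1 hn0).
    - by move=> i _; left.
    - by rewrite /= add0n modnn.
    - by move=> y _; exists (y : nat); [apply: ltnW | rewrite add0n modn_small].
  move=> hw; have := @tsp_le n S _ hw ltac:(lia); lia.
have [w [t [hw [sub ht]]]] := @ccnt_ub n n./2 S (ltac:(lia) : 2 * n./2 < n.+1) Sne hc.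
pose g j := if j <= t then j else 2 * t - j.
have st : forall i, i < 2 * t -> g i.+1 = (g i).+1 \/ g i = (g i.+1).+1.
  move=> i hi; rewrite /g; case: (leqP i t); case: (leqP i.+1 t); lia.
have en : (w + g (2 * t)) %% n.+1 = (w + g 0) %% n.+1.
  have -> : g (2 * t) = g 0. rewrite /g leq0n; case: (leqP (2 * t) t) => H; clear st; lia.
  by [].
have mem : forall y : 'I_n.+1, y \in S -> exists2 j, j <= 2 * t & (y : nat) = (w + g j) %% n.+1.
  move=> y yS; have := fintype.subsetP sub y yS; rewrite inE => hy.
  exists (cdist n w y); first by lia.
  by rewrite /g hy cdist_inv.
have hw2 := @walk_gen n S w g (2 * t) hn0 st en mem.
have := @tsp_le n S _ hw2 ltac:(lia); lia.
Qed.

Local Open Scope classical_set_scope.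
Local Open Scope ring_scope.

Lemma cvg_apx (R : realType) (u v : nat -> R) (l C : R) (N0 : nat) :
  u @ \oo --> l ->
  (forall n, (N0 <= n)%N -> `|v n - u n| <= C * n.+1%:R^-1) ->
  v @ \oo --> l.
Proof.
move=> hu hb.
have hh : (fun n : nat => C * n.+1%:R^-1 : R) @ \oo --> 0.
  rewrite -(mulr0 C); apply: cvgMl_tmp; exact: cvg_harmonic.
apply: (@squeeze_cvgr _ _ _ _ (fun n => u n - C * n.+1%:R^-1)
          (fun n => u n + C * n.+1%:R^-1) v _ l).
- exists N0 => // n /= hn.
  have := hb n hn; rewrite ler_norml => /andP [h1 h2].
  move: h1 h2; move: (C * n.+1%:R^-1) => e h1 h2.
  apply/andP; split; lra.
- by rewrite -(subr0 l); apply: cvgB.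
- by rewrite -(addr0 l); apply: cvgD.
Qed.


Lemma cvg_prod_seq (R : realType) (k : nat) (f : nat -> nat -> R) (l : R) :
  (forall i, (i < k)%N -> f i @ \oo --> l) ->
  (fun n => \prod_(i < k) f i n) @ \oo --> l ^+ k.
Proof.
elim: k => [|k IH] hf.
  under eq_fun => n do rewrite big_ord0.
  rewrite expr0; exact: cvg_cst.
under eq_fun => n do rewrite big_ord_recr /=.
rewrite exprSr; apply: cvgM.
  by apply: IH => i hi; apply: hf; lia.
exact: hf.
Qed.

Lemma factor_cvg (R : realType) (i : nat) :
  (fun n : nat => (((n.+1)./2 - i)%N%:R / (n - i)%N%:R : R)) @ \oo --> (2^-1 : R).
Proof.
apply: (@cvg_apx R (fun _ => (2^-1 : R)) _ _ (i.+1)%:R (2 * i + 2)%N); first exact: cvg_cst.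
move=> n hn.
have hh : (2 * (n.+1)./2 = n \/ 2 * (n.+1)./2 = n.+1)%N.
  have := odd_double_half n.+1; rewrite -mul2n; case: (odd n.+1) => /=; lia.
set A := ((n.+1)./2 - i)%N; set D := (n - i)%N.
have f1 : (D <= 2 * A + i.+1)%N by rewrite /A /D; lia.
have f2 : (2 * A <= D + i.+1)%N by rewrite /A /D; lia.
have f3 : (n.+1 <= 2 * D)%N by rewrite /D; lia.
have f4 : (0 < D)%N by rewrite /D; lia.
have r1 : (D%:R <= 2 * A%:R + i.+1%:R :> R).
  by move: f1; rewrite -(ler_nat R) natrD natrM.
have r2 : (2 * A%:R <= D%:R + i.+1%:R :> R).
  by move: f2; rewrite -(ler_nat R) natrD natrM.
have r3 : (n.+1%:R <= 2 * D%:R :> R).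
  by move: f3; rewrite -(ler_nat R) natrM.
have r4 : (0 < D%:R :> R) by rewrite ltr0n.
move: r1 r2 r3 r4; move: (A%:R : R) (D%:R : R) (i.+1%:R : R) => a d c r1 r2 r3 r4.
have m0 : (0 < n.+1%:R :> R) by rewrite ltr0n.
move: r3 m0; move: (n.+1%:R : R) => m r3 m0.
have e : a / d - 2^-1 = (2 * a - d) / (2 * d).
  by field; exact: lt0r_neq0.
rewrite e normf_div (ger0_norm (_ : 0 <= 2 * d)); last by lra.
rewrite ler_pdivrMr; last by lra.
have hc : `|2 * a - d| <= c by rewrite ler_norml; apply/andP; split; lra.
apply: (le_trans hc).
rewrite mulrAC ler_pdivlMr //.
have c0 : 0 <= c by lra.
nra.
Qed.


Lemma ratio_prod (R : realType) k n : (k <= n)%N ->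
  ('C((n.+1)./2, k)%:R / 'C(n, k)%:R : R) =
  \prod_(i < k) (((n.+1)./2 - i)%N%:R / (n - i)%N%:R).
Proof.
move=> hk.
rewrite prodf_div -!natr_prod -!ffact_prod -!bin_ffact !natrM.
field; apply/andP; split; rewrite pnatr_eq0 -lt0n ?fact_gt0 ?bin_gt0 //.
Qed.

Lemma r_cvg (R : realType) k :
  (fun n : nat => ('C((n.+1)./2, k)%:R / 'C(n, k)%:R : R)) @ \oo --> (2^-1 : R) ^+ k.
Proof.
apply: (@cvg_apx R (fun n => \prod_(i < k) (((n.+1)./2 - i)%N%:R / (n - i)%N%:R)) _ _ 0 k).
  apply: (@cvg_prod_seq R k (fun i n => (((n.+1)./2 - i)%N%:R / (n - i)%N%:R)) (2^-1)) => i _.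
  exact: factor_cvg.
by move=> n hn; rewrite ratio_prod // subrr normr0 mul0r.
Qed.


Lemma nat_sum_bounds m k : (2 <= m)%N -> (1 <= k)%N ->
  (m.+1 * 'C(m.+1, k) <= (\sum_(S : {set 'I_m.+1} | #|S| == k) tsp S) + 2 * (m.+1 * 'C((m./2).+1, k))
     <= m.+2 * 'C(m.+1, k))%N.
Proof.
move=> hm hk.
set T := (\sum_(S : {set 'I_m.+1} | #|S| == k) tsp S)%N.
have hs := @sum_ccnt m m./2 k ltac:(lia).
have cardk : (\sum_(S : {set 'I_m.+1} | #|S| == k) 1)%N = 'C(m.+1, k).
  by rewrite sum1dep_card card_draws card_ord.
have cst c : (\sum_(S : {set 'I_m.+1} | #|S| == k) c)%N = (c * 'C(m.+1, k))%N.
  by rewrite -cardk big_distrr /=; apply: eq_bigr => S _; rewrite muln1.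
have split : (\sum_(S : {set 'I_m.+1} | #|S| == k) (tsp S + 2 * ccnt m m./2 S))%N
   = (T + 2 * (m.+1 * 'C((m./2).+1, k)))%N.
  by rewrite big_split /= -big_distrr /= hs.
rewrite -split -!cst.
apply/andP; split; apply: leq_sum => S /eqP hS;
  have := @tsp_bounds m S hm ltac:(apply/eqP => e; rewrite e cards0 in hS; lia);
  move/andP => [h1 h2] //.
Qed.

Lemma real_bound (R : realType) (t c a x y : R) :
  0 < c -> 1 <= x -> y = x + 1 -> x * c <= t + 2 * (x * a) <= y * c ->
  `|t / c / x - (1 - 2 * (a / c))| <= 2 * y^-1.
Proof.
move=> c0 x1 ey /andP [h1 h2].
have e : t / c / x - (1 - 2 * (a / c)) = (t + 2 * (x * a) - x * c) / (x * c).
  by field; apply/andP; split; [exact: lt0r_neq0 | apply: lt0r_neq0; lra].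
have xc : 0 < x * c by apply: mulr_gt0 => //; lra.
rewrite e ger0_norm; last by apply: divr_ge0; [lra | exact: ltW].
rewrite ler_pdivrMr // mulrAC ler_pdivlMr; last by lra.
have w0 : 0 <= t + 2 * (x * a) - x * c by lra.
have w1 : t + 2 * (x * a) - x * c <= c by rewrite ey in h2; lra.
move: (t + 2 * (x * a) - x * c) w0 w1 => w w0 w1.
rewrite ey; nra.
Qed.

Theorem lemma1 (R : realType) (k : nat) (hk : (2 <= k)%N) :
  (fun n : nat => mu_tsp R k n / n%:R) @ \oo --> (1 - 2 ^- (k - 1) : R).
Proof.
apply: (@cvg_apx R (fun n => 1 - 2 * ('C((n.+1)./2, k)%:R / 'C(n, k)%:R)) _ _ 2 (k + 3)).
  have -> : (1 - 2 ^- (k - 1) : R) = 1 - 2 * (2^-1) ^+ k.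
    case: k hk => [//|k'] _; rewrite subn1 /= exprS mulrA mulfV ?mul1r ?exprVn //.
  apply: cvgB; first exact: cvg_cst.
  apply: cvgMl_tmp; exact: r_cvg.
case=> [|m] hm; first by lia.
have hb := @nat_sum_bounds m k ltac:(lia) ltac:(lia).
rewrite /mu_tsp.
change ((m.+2)./2) with ((m./2).+1).
apply: real_bound.
- by rewrite ltr0n bin_gt0; lia.
- by rewrite ler1n.
- by rewrite -natr1.
- case/andP: hb => h1 h2; apply/andP; split.
    by move: h1; rewrite -(ler_nat R) natrD !natrM.
  by move: h2; rewrite -(ler_nat R) natrD !natrM.
Qed.
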